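(* Let $d\ge1$, $D>0$, $\sigma\ge0$, $\alpha\in[0,1)$. Let $w^*\in\mathbb{R}^d$ with $\|w^*\|\le D$, and let $(x,\epsilon,b)$ be mutually independent random variables with $x\in\mathbb{R}^d$, $\|x\|\le1$ a.s., $\mathbb{E}[x]=0$, $\epsilon\in\mathbb{R}$, $|\epsilon|\le\sigma$ a.s., $\mathbb{E}\epsilon=0$, $b\in\mathbb{R}$, $\mathbb{P}(b\ne0)=\alpha$; set $y=\langle w^*,x\rangle+\epsilon+b$. Let $R=6D+\sigma$. Then for every $w\in\mathcal W$, $$F(w)-F(w^* )\le\frac1{1-\alpha}\big(L_R(w)-L_R(w^* )\big).$$
   Context: $\mathcal W=\{w\in\mathbb{R}^d:\|w\|\le D\}$. The Huber loss is $h_R(s)=\frac12s^2$ if $|s|\le R$ and $h_R(s)=R(|s|-\frac12R)$ otherwise. $L_R(w)=\mathbb{E}_{x,\epsilon,b}[h_R(\langle w,x\rangle-y)]$ is the expected Huber loss under the contaminated distribution, and $F(w)=\mathbb{E}_{x,\epsilon}\big[\tfrac12(\langle w,x\rangle-\langle w^*,x\rangle-\epsilon)^2\big]$ is the expected squared loss on uncorrupted data.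
   Formalization: The Huber loss $h_R(\langle w,x\rangle-y)$ is also assumed integrable for every w ∈ 𝒲, so $L_R$ is finite on 𝒲. The statement above fails without it. *)

(* Defs.v *)
From HB Require Import structures.
From mathcomp Require Import all_boot all_order all_algebra.
From mathcomp Require Import all_classical all_reals all_analysis.
Set Implicit Arguments. Unset Strict Implicit. Unset Printing Implicit Defensive.
Import Order.TTheory GRing.Theory Num.Theory.
Local Open Scope classical_set_scope.
Local Open Scope ring_scope.

Definition huber {R : realType} (r s : R) : R :=
  if `|s| <= r then s ^+ 2 / 2 else r * (`|s| - r / 2).

Definition vnorm {R : realType} {n : nat} (w : 'rV[R]_n) : R :=
  Num.sqrt (\sum_(i < n) w ord0 i ^+ 2).

Definition dotX {R : realType} {T : Type} {n : nat} (w : 'rV[R]_n)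
  (X : 'I_n -> T -> R) (t : T) : R :=
  \sum_(i < n) w ord0 i * X i t.

Definition sigma_vec {R : realType} {T : Type} {n : nat}
  (X : 'I_n -> T -> R) : set (set T) :=
  <<s [set A | exists i (B : set R), measurable B /\ A = X i @^-1` B] >>.

Definition sigma_rv {R : realType} {T : Type} (Y : T -> R) : set (set T) :=
  <<s [set A | exists B : set R, measurable B /\ A = Y @^-1` B] >>.

Definition indep3 {d} {T : measurableType d} {R : realType}
  (P : probability T R) (G1 G2 G3 : set (set T)) : Prop :=
  forall A B C, G1 A -> G2 B -> G3 C ->
    P (A `&` B `&` C) = (P A * P B * P C)%E.

Definition huber_risk {d} {T : measurableType d} {R : realType}
  (P : probability T R) {n : nat} (r : R) (wstar : 'rV[R]_n)
  (X : 'I_n -> T -> R) (eps b : T -> R) (w : 'rV[R]_n) : \bar R :=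
  (\int[P]_t (huber r (dotX w X t - (dotX wstar X t + eps t + b t)))%:E)%E.

Definition sq_risk {d} {T : measurableType d} {R : realType}
  (P : probability T R) {n : nat} (wstar : 'rV[R]_n)
  (X : 'I_n -> T -> R) (eps : T -> R) (w : 'rV[R]_n) : \bar R :=
  (\int[P]_t ((dotX w X t - dotX wstar X t - eps t) ^+ 2 / 2)%:E)%E.

(* Main.v *)
Require Import Defs.
From HB Require Import structures.
From mathcomp Require Import all_boot all_order all_algebra.
From mathcomp Require Import all_classical all_reals all_analysis.
From mathcomp Require Import measurable_realfun ring lra.
Import Order.TTheory GRing.Theory Num.Theory.
Local Open Scope classical_set_scope.
Local Open Scope ring_scope.
Section Real.
Variable R : realType.

Lemma stair_aux (N : nat) (x : R) : 0 <= x ->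
  [/\ \sum_(k < N) ((k.+1%:R <= x)%R)%:R <= x,
      x <= N%:R -> x <= \sum_(k < N) ((k.+1%:R <= x)%R)%:R + 1 &
      N%:R <= x -> \sum_(k < N) ((k.+1%:R <= x)%R)%:R = N%:R :> R].
Proof.
move=> x0; elim: N => [|N [IH1 IH2 IH3]].
  by rewrite big_ord0; split => // h; lra.
rewrite big_ord_recr /=; set S := \sum_(_ < _) _ in IH1 IH2 IH3 *.
have [hN|hN] := leP (N.+1%:R) x.
- have -> : S = N%:R by apply: IH3; apply: le_trans hN; rewrite ler_nat.
  rewrite /= -natrD addn1; split => //; lra.
- rewrite /= addr0; split => //.
  move=> _; have [hx|hx] := leP x N%:R; first exact: IH2.
  rewrite IH3; last exact: ltW.
  by move: hN; rewrite -natr1 => hN; lra.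
Qed.

Definition phi (r s : R) := Num.max (- r) (Num.min r s).

Lemma phi_cases (r s : R) : 0 <= r ->
  [\/ s < - r /\ phi r s = - r, - r <= s <= r /\ phi r s = s |
      r < s /\ phi r s = r].
Proof.
move=> r0; rewrite /phi.
have [h1|h1] := ltP s (- r).
  apply: Or31; split => //; rewrite min_r; last lra.
  by rewrite max_l //; exact: ltW.
have [h2|h2] := leP s r.
  by apply: Or32; split => //; rewrite max_r.
by apply: Or33; split => //; rewrite max_r //; lra.
Qed.

Lemma huber_phi (r s : R) : 0 <= r -> huber r s = phi r s * s - phi r s ^+ 2 / 2.
Proof.
move=> r0; rewrite /huber.
have [[h1 ->]|[/andP[h1 h2] ->]|[h1 ->]] := phi_cases r s r0.
- rewrite ltr0_norm; last lra.
  rewrite ifF; last by apply/negbTE; rewrite -ltNge; lra.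
  by rewrite expr2; field.
- rewrite ifT; last by rewrite ler_norml h1 h2.
  by rewrite expr2; field.
- rewrite gtr0_norm; last lra.
  rewrite ifF; last by apply/negbTE; rewrite -ltNge.
  by rewrite expr2; field.
Qed.

Lemma phi_quad (r s : R) : `|s| <= r -> phi r s = s.
Proof.
move=> h; have r0 : 0 <= r by exact: le_trans h.
move: h; rewrite ler_norml => /andP[h1 h2].
have [[h3 ->]|[_ ->]|[h3 ->]] := phi_cases r s r0 => //; lra.
Qed.

Lemma phi_bound (r s : R) : 0 <= r -> `|phi r s| <= r.
Proof.
move=> r0; rewrite ler_norml.
have [[h3 ->]|[/andP[h1 h2] ->]|[h3 ->]] := phi_cases r s r0; apply/andP; split; lra.
Qed.

Lemma huber_convex (r z a : R) : 0 < r ->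
  huber r a + phi r a * z <= huber r (z + a).
Proof.
move=> r0; have r0' := ltW r0; rewrite !huber_phi //.
have [[h1 ->]|[/andP[h1 h2] ->]|[h1 ->]] := phi_cases r a r0';
have [[h3 ->]|[/andP[h4 h5] ->]|[h3 ->]] := phi_cases r (z + a) r0';
  rewrite !expr2; nra.
Qed.

End Real.
Arguments phi {R}. Arguments huber_convex {R}. Arguments phi_bound {R}.
Arguments huber_phi {R}. Arguments phi_cases {R}. Arguments phi_quad {R}.
Arguments stair_aux {R}.
Section CS.
Context {R : realType}.
Lemma cauchy_schwarz n (a b : 'I_n -> R) :
  (\sum_i a i * b i) ^+ 2 <= (\sum_i a i ^+ 2) * (\sum_i b i ^+ 2).
Proof.
have H : \sum_i \sum_j (a i * b j - a j * b i) ^+ 2 =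
  2 * ((\sum_i a i ^+ 2) * (\sum_i b i ^+ 2)) - 2 * (\sum_i a i * b i) ^+ 2.
  have -> : \sum_i \sum_j (a i * b j - a j * b i) ^+ 2 =
    \sum_i \sum_j (a i ^+ 2 * b j ^+ 2) + \sum_i \sum_j (a j ^+ 2 * b i ^+ 2)
    - 2 * \sum_i \sum_j (a i * b i * (a j * b j)).
    rewrite -big_split /= mulr_sumr -sumrB; apply: eq_bigr => i _.
    rewrite -big_split /= mulr_sumr -sumrB; apply: eq_bigr => j _; ring.
  rewrite -!big_distrlr /= exchange_big /= -big_distrlr /= expr2 mulrC; ring.
have : 0 <= \sum_i \sum_j (a i * b j - a j * b i) ^+ 2.
  by apply: sumr_ge0 => i _; apply: sumr_ge0 => j _; exact: sqr_ge0.
rewrite H; lra.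
Qed.

Lemma dot_le_vnorm n (w : 'rV[R]_n) (x : 'I_n -> R) :
  \sum_i x i ^+ 2 <= 1 -> `|\sum_i w ord0 i * x i| <= vnorm w.
Proof.
move=> hx; rewrite /vnorm -sqrtr_sqr; apply: ler_wsqrtr.
apply: (le_trans (cauchy_schwarz _ (fun i => w ord0 i) x)).
have h0 : 0 <= \sum_i w ord0 i ^+ 2 by apply: sumr_ge0 => i _; exact: sqr_ge0.
by rewrite -[X in _ <= X]mulr1; apply: ler_wpM2l.
Qed.
End CS.

Lemma eq_by_approx (R : realType) (a b C : R) :
  (forall n : nat, `|a - b| <= C / n.+1%:R) -> a = b.
Proof.
move=> h; apply/eqP/negPn/negP => hne.
have e0 : 0 < `|a - b| by rewrite normr_gt0 subr_eq0.
set e := `|a - b| in e0 h.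
have h2 := h (Num.trunc (C / e)).
have h1 := truncnS_gt (C / e).
set m := (Num.trunc (C / e)).+1%:R in h1 h2.
have m0 : 0 < m by rewrite ltr0n.
move: h1 h2; rewrite ltr_pdivrMr // ler_pdivlMr // => h1 h2.
nra.
Qed.

Section Indep.
Context {d} {T : measurableType d} {R : realType} {P : probability T R}.
Local Notation E f := (Rintegral P setT f).

Definition mb (f : T -> R) :=
  measurable_fun setT f /\ exists M, forall t, `|f t| <= M.

Lemma mb_int f : mb f -> P.-integrable setT (EFin \o f).
Proof.
move=> [mf [M hM]]; apply: measurable_bounded_integrable => //.
- by apply: (le_lt_trans (probability_le1 P measurableT)); exact: ltry.
- rewrite /bounded_near; near=> y => t _ /=.
  apply: le_trans (hM t) _; near: y; exact: nbhs_pinfty_ge (num_real M).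
Unshelve. all: end_near. Qed.

Lemma mb_cst c : mb (fun _ => c).
Proof. by split; [exact: measurable_cst | exists `|c|]. Qed.

Lemma mbD {f g} : mb f -> mb g -> mb (fun t => f t + g t).
Proof.
move=> [mf [M hM]] [mg [K hK]]; split; first exact: measurable_funD.
by exists (M + K) => t; apply: le_trans (ler_normD _ _) _; exact: lerD.
Qed.

Lemma mbB {f g} : mb f -> mb g -> mb (fun t => f t - g t).
Proof.
move=> [mf [M hM]] [mg [K hK]]; split; first exact: measurable_funB.
by exists (M + K) => t; apply: le_trans (ler_normB _ _) _; exact: lerD.
Qed.

Lemma mbM {f g} : mb f -> mb g -> mb (fun t => f t * g t).
Proof.
move=> [mf [M hM]] [mg [K hK]]; split; first exact: measurable_funM.
by exists (M * K) => t; rewrite normrM; apply: ler_pM.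
Qed.

Lemma indic_le1 (A : set T) t : `|(\1_A t : R)| <= 1.
Proof. by rewrite /indic; case: (t \in A); rewrite ?normr1 ?normr0. Qed.

Lemma mb_indic {A : set T} : measurable A -> mb (\1_A).
Proof.
move=> mA; split; first exact: measurable_indic.
by exists 1 => t; exact: indic_le1.
Qed.

Lemma mb_sum {N} {g : 'I_N -> T -> R} :
  (forall k, mb (g k)) -> mb (fun t => \sum_(k < N) g k t).
Proof.
move=> hg; elim: N g hg => [|N IH] g hg.
  have -> : (fun t => \sum_(k < 0) g k t) = (fun _ => 0).
    by apply: funext => t; rewrite big_ord0.
  exact: mb_cst.
have -> : (fun t => \sum_(k < N.+1) g k t) =
  (fun t => \sum_(k < N) g (widen_ord (leqnSn N) k) t + g ord_max t).
  by apply: funext => t; rewrite big_ord_recr.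
apply: mbD; last exact: hg.
exact: (@IH (fun k => g (widen_ord (leqnSn N) k))).
Qed.

Lemma E_D {f g} : mb f -> mb g -> E (fun t => f t + g t) = E f + E g.
Proof. by move=> hf hg; apply: RintegralD => //; exact: mb_int. Qed.

Lemma E_B {f g} : mb f -> mb g -> E (fun t => f t - g t) = E f - E g.
Proof. by move=> hf hg; apply: RintegralB => //; exact: mb_int. Qed.

Lemma E_Z c {f} : mb f -> E (fun t => c * f t) = c * E f.
Proof. by move=> hf; apply: RintegralZl => //; exact: mb_int. Qed.

Lemma E_cst c : E (fun _ => c) = c.
Proof.
have hP : P [set: T] = 1%E := probability_setT P.
rewrite Rintegral_cst // (_ : fine _ = 1) ?mulr1 //.
exact: (congr1 fine hP).
Qed.

Lemma E_indic (A : set T) : measurable A -> E (\1_A) = fine (P A).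
Proof. by move=> mA; rewrite /Rintegral integral_indic // setIT. Qed.

Lemma E_sum {N} {g : 'I_N -> T -> R} :
  (forall k, mb (g k)) -> E (fun t => \sum_(k < N) g k t) = \sum_(k < N) E (g k).
Proof.
move=> hg; elim: N g hg => [|N IH] g hg.
  transitivity (E (fun _ => 0)); first by apply: eq_Rintegral => t _; rewrite big_ord0.
  by rewrite E_cst big_ord0.
rewrite big_ord_recr /=.
rewrite -(@IH (fun k => g (widen_ord (leqnSn N) k))) //.
rewrite -(E_D (mb_sum (fun k => hg (widen_ord (leqnSn N) k))) (hg ord_max)).
by apply: eq_Rintegral => t _; rewrite big_ord_recr.
Qed.

Lemma E_le {f g} : mb f -> mb g -> (forall t, f t <= g t) -> E f <= E g.
Proof. by move=> hf hg fg; apply: le_Rintegral => //; exact: mb_int. Qed.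

Lemma E_abs_le {f} c : mb f -> (forall t, `|f t| <= c) -> `|E f| <= c.
Proof.
move=> hf hc; apply: le_trans (le_normr_Rintegral _ _) _ => //; first exact: mb_int.
rewrite -[X in _ <= X](E_cst c); apply: le_Rintegral => //.
- exact/integrable_norm/mb_int.
- exact: finite_measure_integrable_cst.
Qed.

Lemma thr_meas {f : T -> R} c : measurable_fun setT f ->
  measurable [set t | c <= f t].
Proof.
move=> mf; have := mf measurableT _ (measurable_itv `[c, +oo[).
rewrite setTI; congr measurable; apply/seteqP; split => t /=;
  by rewrite in_itv /= andbT.
Qed.

Lemma gen_prod (f psi : T -> R) (M K : R) : 0 < M -> 0 <= K ->
  measurable_fun setT f -> (forall t, `|f t| <= M) ->
  mb psi -> (forall t, `|psi t| <= K) ->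
  (forall c, E (fun t => \1_[set t | c <= f t] t * psi t) =
             fine (P [set t | c <= f t]) * E psi) ->
  E (fun t => f t * psi t) = E f * E psi.
Proof.
move=> M0 K0 mf fM mpsi psiK hyp.
have mbf : mb f by split => //; exists M.
apply: (@eq_by_approx _ _ _ (4 * M * K)) => n.
set N := n.+1.
have N0 : 0 < N%:R :> R by rewrite ltr0n.
set del := 2 * M / N%:R.
have del0 : 0 < del by apply: divr_gt0 => //; lra.
pose A (k : 'I_N) := [set t | k.+1%:R * del - M <= f t].
pose fN t := - M + del * \sum_(k < N) \1_(A k) t.
have mA k : measurable (A k) by exact: thr_meas.
have mbI k : mb (\1_(A k)) := mb_indic (mA k).
have mbfN : mb fN.
  exact: (mbD (mb_cst (- M)) (mbM (mb_cst del) (mb_sum mbI))).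
have close t : 0 <= f t - fN t <= del.
  have := fM t; rewrite ler_norml => /andP[fM1 fM2].
  set x := (f t + M) / del.
  have x0 : 0 <= x by apply: divr_ge0; [lra | exact: ltW].
  have hx : f t = x * del - M by rewrite /x divfK ?lt0r_neq0 //; ring.
  have xN : x <= N%:R.
    rewrite /x ler_pdivrMr // /del mulrC divfK ?lt0r_neq0 //; lra.
  have S_eq : \sum_(k < N) \1_(A k) t = \sum_(k < N) ((k.+1%:R <= x)%R)%:R :> R.
    apply: eq_bigr => k _; rewrite /indic; congr (_%:R); congr (nat_of_bool _).
    have -> : (k.+1%:R <= x) = (k.+1%:R * del - M <= f t).
      by rewrite /x ler_pdivlMr // lerBlDr.
    by apply/idP/idP => [/set_mem|/mem_set].
  have [S1 S2 _] := @stair_aux R N x x0.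
  rewrite /fN S_eq hx.
  set S := \sum_(k < N) _ in S1 S2 *.
  have S2' := S2 xN.
  by apply/andP; split; nra.
have mbfNpsi : mb (fun t => fN t * psi t) by exact: mbM.
have claim2 : E (fun t => fN t * psi t) = E fN * E psi.
  have -> : E fN = - M + del * \sum_(k < N) fine (P (A k)).
    rewrite /fN E_D; [|exact: mb_cst|exact: (mbM (mb_cst del) (mb_sum mbI))].
    rewrite E_cst E_Z; last exact: mb_sum mbI.
    rewrite E_sum //; congr (_ + _ * _); apply: eq_bigr => k _; exact: E_indic.
  transitivity (E (fun t => - M * psi t + del * \sum_(k < N) (\1_(A k) t * psi t))).
    by apply: eq_Rintegral => t _; rewrite /fN mulrDl -mulrA mulr_suml.
  have mbk k : mb (fun t => \1_(A k) t * psi t) by exact: mbM.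
  rewrite E_D; [|exact: mbM (mb_cst _) mpsi|exact: (mbM (mb_cst del) (mb_sum mbk))].
  rewrite (E_Z (- M) mpsi) (E_Z del (mb_sum mbk)).
  rewrite E_sum //.
  under eq_bigr do rewrite hyp.
  by rewrite -mulr_suml mulrDl mulrA.
have b1 : `|E (fun t => f t * psi t) - E (fun t => fN t * psi t)| <= del * K.
  rewrite -E_B; [|exact: mbM|exact: mbfNpsi].
  apply: E_abs_le; first exact: mbB (mbM mbf mpsi) mbfNpsi.
  move=> t; rewrite -mulrBl normrM; apply: ler_pM => //.
  by have /andP[h1 h2] := close t; rewrite ger0_norm.
have b2 : `|E fN - E f| <= del.
  rewrite -E_B //; apply: E_abs_le; first exact: mbB.
  by move=> t; have /andP[h1 h2] := close t; rewrite distrC ger0_norm.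
have b3 : `|E psi| <= K by exact: E_abs_le.
have -> : E (fun t => f t * psi t) - E f * E psi =
  (E (fun t => f t * psi t) - E (fun t => fN t * psi t)) + (E fN - E f) * E psi.
  by rewrite claim2; ring.
apply: le_trans (ler_normD _ _) _.
rewrite normrM.
have b4 : `|E fN - E f| * `|E psi| <= del * K by apply: ler_pM.
have -> : 4 * M * K / N%:R = del * K + del * K by rewrite /del; field; rewrite lt0r_neq0.
exact: lerD.
Qed.

Lemma fineM' (x y : \bar R) : x \is a fin_num -> y \is a fin_num ->
  fine (x * y)%E = fine y * fine x.
Proof. by move=> hx hy; rewrite fineM // mulrC. Qed.

Lemma ind_prod (G H : set (set T)) (f g : T -> R) (M K : R) :
  (forall A B, G A -> H B -> P (A `&` B) = (P A * P B)%E) ->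
  0 < M -> 0 < K ->
  measurable_fun setT f -> (forall t, `|f t| <= M) ->
  (forall c, G [set t | c <= f t]) ->
  measurable_fun setT g -> (forall t, `|g t| <= K) ->
  (forall c, H [set t | c <= g t]) ->
  E (fun t => f t * g t) = E f * E g.
Proof.
move=> ind M0 K0 mf fM fG mg gK gH.
have mbg : mb g by split => //; exists K.
have step1 c : E (fun t => \1_[set t | c <= f t] t * g t) =
               fine (P [set t | c <= f t]) * E g.
  set A := [set t | c <= f t].
  have mA : measurable A := thr_meas c mf.
  have HYP : forall c', E (fun t => \1_[set t | c' <= g t] t * \1_A t) =
      fine (P [set t | c' <= g t]) * E (\1_A).
    move=> c'; set B := [set t | c' <= g t].
    have mB : measurable B := thr_meas c' mg.
    transitivity (E (\1_(B `&` A))).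
      by apply: eq_Rintegral => t _; rewrite /indic in_setI; case: (t \in B); case: (t \in A); rewrite ?mulr1 ?mulr0.
    rewrite !E_indic //; last exact: measurableI.
    rewrite setIC ind; [|exact: fG|exact: gH].
    by apply: fineM'; exact: fin_num_measure.
  have h := @gen_prod g (\1_A) K 1 K0 ler01 mg gK (mb_indic mA) (indic_le1 A) HYP.
  rewrite E_indic // in h.
  transitivity (E (fun t => g t * \1_A t)).
    by apply: eq_Rintegral => t _; exact: mulrC.
  by rewrite h mulrC.
exact: (@gen_prod f g M K M0 (ltW K0) mf fM mbg gK step1).
Qed.

Lemma ereal_aux1 (x y : \bar R) : x \is a fin_num -> y \is a fin_num ->
  (x - x * y = x * (1 - y))%E.
Proof.
case: x => // x; case: y => // y _ _.
by rewrite -EFinM -EFinB -EFinB -EFinM; congr EFin; ring.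
Qed.

Lemma indep_ext (A : set T) (G : set (set T)) :
  measurable A -> G `<=` measurable -> setI_closed G ->
  (forall B, G B -> P (A `&` B) = (P A * P B)%E) ->
  forall S, <<s G >> S -> P (A `&` S) = (P A * P S)%E.
Proof.
move=> mA GM GI hG.
pose Hs := [set S | measurable S /\ P (A `&` S) = (P A * P S)%E].
have dyn : dynkin Hs.
  split.
  - split; first exact: measurableT.
    by rewrite setIT probability_setT mule1.
  - move=> S [mS hS]; split; first exact: measurableC.
    rewrite probability_setC // -setDE measureD //; last first.
      by apply: (le_lt_trans (probability_le1 P mA)); exact: ltry.
    apply: etrans (congr1 (fun z => (P A - z)%E) hS) _.
    have fA : P A \is a fin_num by exact: fin_num_measure.
    have fS : P S \is a fin_num by exact: fin_num_measure.
    move: fA fS; set a := P A; set s := P S.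
    case: a => // a; case: s => // s _ _ /=.
    by rewrite -EFinD -EFinD -EFinM mulrDr mulrN mulr1.
  - move=> F tF hF.
    have mF n : measurable (F n) by case: (hF n).
    split; first exact: bigcupT_measurable.
    rewrite setI_bigcupr (measure_bigcup _ setT (fun n => A `&` F n)); last 2 first.
      by move=> n _; exact: measurableI.
      exact: trivIset_setIl.
    rewrite (measure_bigcup _ setT F) //.
    have fA : P A \is a fin_num by exact: fin_num_measure.
    have hF' n : P (A `&` F n) = (P A * P (F n))%E by case: (hF n).
    move: fA hF'; case: (P A) => // a _ hF'.
    rewrite -nneseriesZl //.
    by apply: eq_eseriesr => n _; exact: hF'.
move=> S GS.
have GH : G `<=` Hs by move=> B GB; split; [exact: GM | exact: hG].
have := @lambda_system_subset _ G GI setT Hs (proj1 (dynkin_lambda_system Hs) dyn)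
  GH (fun X _ x _ => I) S GS.
by case.
Qed.


Lemma E_efin (f : T -> R) : mb f -> (\int[P]_t (f t)%:E)%E = (E f)%:E.
Proof. by move=> hf; rewrite /Rintegral fineK //; apply: integrable_fin_num => //; exact: mb_int. Qed.

Lemma ae_int (f g : T -> R) : measurable_fun setT f -> measurable_fun setT g ->
  {ae P, forall t, f t = g t} ->
  (\int[P]_t (f t)%:E)%E = (\int[P]_t (g t)%:E)%E.
Proof.
move=> mf mg hfg; apply: ae_eq_integral => //.
- exact/measurable_EFinP.
- exact/measurable_EFinP.
- by apply: filterS hfg => t h _; rewrite /= h.
Qed.


Lemma mbX2 (f : T -> R) : mb f -> mb (fun t => f t ^+ 2 / 2).
Proof.
move=> hf; have -> : (fun t => f t ^+ 2 / 2) = (fun t => (f t * f t) * 2^-1).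
  by apply: funext => t; rewrite expr2.
exact: mbM (mbM hf hf) (mb_cst _).
Qed.

End Indep.


Section GSig.
Context {d} {T : measurableType d} {R : realType}.

Lemma gsig_sub {G0 : set (set T)} : G0 `<=` measurable -> <<s G0 >> `<=` measurable.
Proof. by move=> hG; apply: smallest_sub => //; exact: sigma_algebra_measurable. Qed.

Lemma gsig_thr {G0 : set (set T)} {f : T -> R} :
  measurable_fun (setT : set (g_sigma_algebraType G0)) f ->
  forall c, <<s G0 >> [set t | c <= f t].
Proof. by move=> mf c; exact: (@thr_meas _ (g_sigma_algebraType G0) R f c mf). Qed.

Lemma gsig_gen {G0 : set (set T)} {f : T -> R} :
  (forall B, measurable B -> G0 (f @^-1` B)) ->
  measurable_fun (setT : set (g_sigma_algebraType G0)) f.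
Proof.
move=> h _ Y mY; rewrite setTI; apply: sub_sigma_algebra; exact: h.
Qed.

Lemma gsig_toT {G0 : set (set T)} {f : T -> R} : G0 `<=` measurable ->
  measurable_fun (setT : set (g_sigma_algebraType G0)) f ->
  measurable_fun (setT : set T) f.
Proof.
move=> hG mf _ Y mY; apply: (gsig_sub hG); exact: (mf measurableT Y mY).
Qed.

End GSig.

Section Helpers.
Context {R : realType}.

Lemma huber_quad (r s : R) : `|s| <= r -> huber r s = s ^+ 2 / 2.
Proof. by move=> h; rewrite /huber h. Qed.

Lemma huber_lip (r z a : R) : 0 < r ->
  `|huber r (z + a) - huber r a| <= r * `|z|.
Proof.
move=> r0; have h1 := @huber_convex R r z a r0.
have h2 := @huber_convex R r (- z) (z + a) r0.
rewrite (_ : - z + (z + a) = a) in h2; last by ring.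
have p1 := @phi_bound R r a (ltW r0); have p2 := @phi_bound R r (z + a) (ltW r0).
have q1 : `|phi r a * z| <= r * `|z| by rewrite normrM; apply: ler_wpM2r.
have q2 : `|phi r (z + a) * - z| <= r * `|z|.
  by rewrite normrM normrN; apply: ler_wpM2r.
move: q1 q2; rewrite !ler_norml => /andP[q1 q1'] /andP[q2 q2'].
apply/andP; split; lra.
Qed.

Lemma sq_le1 (x : R) : x ^+ 2 <= 1 -> `|x| <= 1.
Proof. by rewrite expr2 => h; rewrite ler_norml; apply/andP; split; nra. Qed.

Lemma term_le_sum n (x : 'I_n -> R) i : x i ^+ 2 <= \sum_j x j ^+ 2.
Proof.
rewrite (bigD1 i) //= lerDl; apply: sumr_ge0 => j _; exact: sqr_ge0.
Qed.

Lemma mphi (r : R) : measurable_fun setT (phi r).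
Proof.
apply: measurable_maxr; first exact: measurable_cst.
by apply: measurable_minr; [exact: measurable_cst | exact: measurable_id].
Qed.

Lemma mhuber (r : R) : 0 <= r -> measurable_fun setT (huber r).
Proof.
move=> r0; have -> : huber r = fun s => phi r s * s - phi r s ^+ 2 / 2.
  by apply: funext => s; exact: (@huber_phi R r s r0).
apply: measurable_funB; first by apply: measurable_funM; [exact: mphi|exact: measurable_id].
apply: measurable_funM; last exact: measurable_cst.
exact: measurable_funX (mphi r).
Qed.

End Helpers.

Section Helpers2.
Context {d} {T : measurableType d} {R : realType}.

Lemma mdot n (v : 'rV[R]_n) (Y : 'I_n -> T -> R) :
  (forall i, measurable_fun setT (Y i)) -> measurable_fun setT (dotX v Y).
Proof.
move=> hY; apply: measurable_sum => i.
by apply: measurable_funM; [exact: measurable_cst | exact: hY].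
Qed.

Lemma thr_meas_le (f : T -> R) c : measurable_fun setT f ->
  measurable [set t | f t <= c].
Proof.
move=> mf; have := mf measurableT _ (measurable_itv `]-oo, c]).
rewrite setTI; congr measurable; apply/seteqP; split => t /=;
  by rewrite in_itv /=.
Qed.

Lemma mhuber_comp (r : R) (f : T -> R) : 0 <= r -> measurable_fun setT f ->
  measurable_fun setT (fun t => huber r (f t)).
Proof. by move=> r0 mf; exact: measurableT_comp (mhuber r r0) mf. Qed.

Lemma mphi_comp (r : R) (f : T -> R) : measurable_fun setT f ->
  measurable_fun setT (fun t => phi r (f t)).
Proof. by move=> mf; exact: measurableT_comp (mphi r) mf. Qed.

End Helpers2.

Theorem lemma2 (R : realType) (n : nat) (D sigma alpha : R)
  (dT : measure_display) (T : measurableType dT) (P : probability T R)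
  (wstar : 'rV[R]_n) (X : 'I_n -> {RV P >-> R}) (eps b : {RV P >-> R}) :
  (1 <= n)%N -> 0 < D -> 0 <= sigma -> 0 <= alpha -> alpha < 1 ->
  vnorm wstar <= D ->
  indep3 P (sigma_vec (fun i => X i : T -> R)) (sigma_rv eps) (sigma_rv b) ->
  {ae P, forall t, \sum_(i < n) (X i t) ^+ 2 <= 1} ->
  (forall i, ('E_P[X i] = 0)%E) ->
  {ae P, forall t, `|eps t| <= sigma} ->
  ('E_P[eps] = 0)%E ->
  P [set t | b t != 0] = alpha%:E ->
  (* L_R is finite on W, needed for L_R(w) - L_R(wstar) to be meaningful *)
  (forall v : 'rV[R]_n, vnorm v <= D ->
     P.-integrable setT (fun t => (huber (6 * D + sigma)
        (dotX v (fun i => X i : T -> R) t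
         - (dotX wstar (fun i => X i : T -> R) t + eps t + b t)))%:E)) ->
  forall w : 'rV[R]_n, vnorm w <= D ->
    (sq_risk P wstar (fun i => X i : T -> R) eps w
       - sq_risk P wstar (fun i => X i : T -> R) eps wstar <=
     ((1 - alpha)^-1)%:E *
       (huber_risk P (6 * D + sigma) wstar (fun i => X i : T -> R) eps b w
        - huber_risk P (6 * D + sigma) wstar (fun i => X i : T -> R) eps b wstar))%E.
Proof.
move=> hn hD hs ha0 ha1 hwstar hind hX hEX heps hEeps hb hint w hw.
rewrite /sq_risk /huber_risk.
set r := 6 * D + sigma in hint *.
have r0 : 0 < r by rewrite /r; lra.
set Xf := (fun i => X i : T -> R) in hX hint *.
have mX i : measurable_fun setT (Xf i) := measurable_funPT (X i).
have me : measurable_fun setT (eps : T -> R) := measurable_funPT eps.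
have mbb : measurable_fun setT (b : T -> R) := measurable_funPT b.
pose genv := [set A : set T | exists i (B : set R), measurable B /\ A = Xf i @^-1` B].
pose gene := [set A : set T | exists B : set R, measurable B /\ A = (eps : T -> R) @^-1` B].
pose genb := [set A : set T | exists B : set R, measurable B /\ A = (b : T -> R) @^-1` B].
have genvM : genv `<=` measurable.
  by move=> _ [i [B [mB ->]]]; have := mX i measurableT B mB; rewrite setTI.
have geneM : gene `<=` measurable.
  by move=> _ [B [mB ->]]; have := me measurableT B mB; rewrite setTI.
have genbM : genb `<=` measurable.
  by move=> _ [B [mB ->]]; have := mbb measurableT B mB; rewrite setTI.
have hind' : indep3 P <<s genv >> <<s gene >> <<s genb >> := hind.
have vT : <<s genv >> setT := @measurableT _ (g_sigma_algebraType genv).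
have eT : <<s gene >> setT := @measurableT _ (g_sigma_algebraType gene).
have bT : <<s genb >> setT := @measurableT _ (g_sigma_algebraType genb).
have hPT : P setT = 1%E := probability_setT P.
have indVe A B : <<s genv >> A -> <<s gene >> B -> P (A `&` B) = (P A * P B)%E.
  move=> hA hB; have := hind' A B setT hA hB bT.
  by rewrite setIT hPT mule1.
have indVb A C : <<s genv >> A -> <<s genb >> C -> P (A `&` C) = (P A * P C)%E.
  move=> hA hC; have := hind' A setT C hA eT hC.
  by rewrite setIT hPT mule1.
pose pi := [set S : set T | exists E C, <<s gene >> E /\ <<s genb >> C /\ S = E `&` C].
have piM : pi `<=` measurable.
  move=> _ [E [C [hE [hC ->]]]]; apply: measurableI.
  - exact: (gsig_sub geneM).
  - exact: (gsig_sub genbM).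
have piI : setI_closed pi.
  move=> _ _ [E1 [C1 [hE1 [hC1 ->]]]] [E2 [C2 [hE2 [hC2 ->]]]].
  exists (E1 `&` E2), (C1 `&` C2); split; last split.
  - exact: (@measurableI _ (g_sigma_algebraType gene)).
  - exact: (@measurableI _ (g_sigma_algebraType genb)).
  - by rewrite setIACA.
have indVpi A S : <<s genv >> A -> <<s pi >> S -> P (A `&` S) = (P A * P S)%E.
  move=> hA; apply: indep_ext => //.
  - exact: (gsig_sub genvM).
  move=> _ [E [C [hE [hC ->]]]].
  have h1 := hind' A E C hA hE hC.
  have h2 := hind' setT E C vT hE hC.
  rewrite setTI hPT mul1e in h2.
  rewrite setIA h1 h2 muleA //.
pose Tv := g_sigma_algebraType genv.
pose Te := g_sigma_algebraType gene.
pose Tb := g_sigma_algebraType genb.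
pose Tp := g_sigma_algebraType pi.
have mXv i : measurable_fun (setT : set Tv) (Xf i).
  by apply: gsig_gen => B mB; exists i, B.
have meE : measurable_fun (setT : set Te) (eps : T -> R).
  by apply: gsig_gen => B mB; exists B.
have mbTb : measurable_fun (setT : set Tb) (b : T -> R).
  by apply: gsig_gen => B mB; exists B.
have meP : measurable_fun (setT : set Tp) (eps : T -> R).
  apply: gsig_gen => B mB; exists ((eps : T -> R) @^-1` B), setT.
  split; first by apply: sub_sigma_algebra; exists B.
  by split => //; rewrite setIT.
have mbP : measurable_fun (setT : set Tp) (b : T -> R).
  apply: gsig_gen => B mB; exists setT, ((b : T -> R) @^-1` B).
  split => //; split; first by apply: sub_sigma_algebra; exists B.
  by rewrite setTI.
pose Ox := [set t | \sum_i Xf i t ^+ 2 <= 1].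
pose Xp i t := Xf i t * \1_Ox t.
pose Oe := [set t | `|(eps : T -> R) t| <= sigma].
pose ep t := eps t * \1_Oe t.
have mOx : measurable (Ox : set Tv).
  apply: thr_meas_le; apply: measurable_sum => i; exact: measurable_funX.
have mXpv i : measurable_fun (setT : set Tv) (Xp i).
  by apply: measurable_funM => //; exact: measurable_indic.
have mOeE : measurable (Oe : set Te).
  by apply: thr_meas_le; apply: (measurableT_comp _ meE).
have mepE : measurable_fun (setT : set Te) ep.
  by apply: measurable_funM => //; exact: measurable_indic.
have mOeP : measurable (Oe : set Tp).
  by apply: thr_meas_le; apply: (measurableT_comp _ meP).
have mepP : measurable_fun (setT : set Tp) ep.
  by apply: measurable_funM => //; exact: measurable_indic.
have mXp i : measurable_fun setT (Xp i) := gsig_toT genvM (mXpv i).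
have mep : measurable_fun setT ep := gsig_toT geneM mepE.
have hXp1 t : \sum_i Xp i t ^+ 2 <= 1.
  rewrite /Xp /indic; case: (boolP (t \in Ox)) => h.
    under eq_bigr do rewrite mulr1.
    exact: (set_mem h).
  under eq_bigr do rewrite mulr0 expr0n /=.
  by rewrite big1.
have hXpb i t : `|Xp i t| <= 1.
  by apply: sq_le1; apply: le_trans (hXp1 t); exact: (term_le_sum _ (fun j => Xp j t) i).
have hep t : `|ep t| <= sigma.
  rewrite /ep /indic; case: (boolP (t \in Oe)) => h.
    by rewrite mulr1; exact: (set_mem h).
  by rewrite mulr0 normr0.
have hgood : {ae P, forall t, (forall i, Xp i t = Xf i t) /\ ep t = eps t}.
  apply: filterS2 hX heps => t h1 h2; split.
    by move=> i; rewrite /Xp /indic mem_set // mulr1.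
  by rewrite /ep /indic mem_set // mulr1.
have dotE v t : (forall i, Xp i t = Xf i t) -> dotX v Xp t = dotX v Xf t.
  by move=> h; rewrite /dotX; apply: eq_bigr => i _; rewrite h.
pose Zf t := dotX w Xp t - dotX wstar Xp t.
have hZ t : `|Zf t| <= 2 * D.
  apply: le_trans (ler_normB _ _) _.
  have h1 := dot_le_vnorm _ w (fun i => Xp i t) (hXp1 t).
  have h2 := dot_le_vnorm _ wstar (fun i => Xp i t) (hXp1 t).
  rewrite /dotX; lra.
pose c i := w ord0 i - wstar ord0 i.
have Zsum t : Zf t = \sum_i c i * Xp i t.
  by rewrite /Zf /dotX -sumrB; apply: eq_bigr => i _; rewrite /c mulrBl.
have mbXp i : mb (Xp i) by split => //; exists 1.
have mbep : mb ep by split => //; exists sigma.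
have mZv : measurable_fun (setT : set Tv) Zf.
  by apply: measurable_funB; apply: mdot.
have mZ : measurable_fun setT Zf := gsig_toT genvM mZv.
have mbZ : mb Zf by split => //; exists (2 * D).
have mbdot v : mb (dotX v Xp).
  split; first exact: mdot.
  by exists (vnorm v) => t; exact: dot_le_vnorm _ v _ (hXp1 t).
have mdotX v : measurable_fun setT (dotX v Xf) := mdot _ v Xf mX.
have keyS v : (\int[P]_t ((dotX v Xf t - dotX wstar Xf t - eps t) ^+ 2 / 2)%:E)%E =
    (Rintegral P setT (fun t => (dotX v Xp t - dotX wstar Xp t - ep t) ^+ 2 / 2))%:E.
  rewrite -E_efin; last exact: mbX2 _ (mbB (mbB (mbdot v) (mbdot wstar)) mbep).
  apply: ae_int.
  - apply: measurable_funM; last exact: measurable_cst.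
    by apply: measurable_funX; apply: measurable_funB => //; exact: measurable_funB.
  - apply: measurable_funM; last exact: measurable_cst.
    by apply: measurable_funX; apply: measurable_funB => //; apply: measurable_funB; exact: mdot.
  by apply: filterS hgood => t [h1 h2]; rewrite !dotE // h2.
pose a t := - (ep t + b t).
pose Del t := huber r (Zf t + a t) - huber r (a t).
have ma : measurable_fun setT a by apply: measurable_funN; exact: measurable_funD.
have mbDel : mb Del.
  split.
    apply: measurable_funB; apply: mhuber_comp; rewrite ?(ltW r0) //.
    exact: measurable_funD.
  exists (r * (2 * D)) => t; apply: le_trans (huber_lip _ _ _ r0) _.
  by apply: ler_wpM2l; [exact: ltW | exact: hZ].
have keyH : (\int[P]_t (huber r (dotX w Xf t - (dotX wstar Xf t + eps t + b t)))%:E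
   - \int[P]_t (huber r (dotX wstar Xf t - (dotX wstar Xf t + eps t + b t)))%:E)%E
   = (Rintegral P setT Del)%:E.
  rewrite -(integralB_EFin measurableT (hint w hw) (hint wstar hwstar)).
  under eq_integral do rewrite -EFinB.
  rewrite -E_efin //; apply: ae_int.
  - apply: measurable_funB; apply: mhuber_comp; rewrite ?(ltW r0) //;
      apply: measurable_funB => //; apply: measurable_funD => //; exact: measurable_funD.
  - exact: mbDel.1.
  apply: filterS hgood => t [h1 h2].
  rewrite -(dotE w t h1) -(dotE wstar t h1) -h2 /Del /Zf /a.
  by congr (huber r _ - huber r _); ring.
rewrite !keyS keyH -EFinB -EFinM lee_fin.
have EXp0 i : Rintegral P setT (Xp i) = 0.
  apply: EFin_inj; rewrite -E_efin //.
  have := hEX i; rewrite expectation_def => h; apply: (etrans _ h).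
  apply: ae_int => //; apply: filterS hgood => t [h0 _]; exact: h0 i.
have Eep0 : Rintegral P setT ep = 0.
  apply: EFin_inj; rewrite -E_efin //.
  have := hEeps; rewrite expectation_def => h; apply: (etrans _ h).
  apply: ae_int => //; apply: filterS hgood => t [_ h0]; exact: h0.
have Xthr i c : <<s genv >> [set t | c <= Xp i t] := gsig_thr (mXpv i) c.
have epthr c : <<s gene >> [set t | c <= ep t] := gsig_thr mepE c.
have s1 : 0 < sigma + 1 by lra.
have hep1 t : `|ep t| <= sigma + 1 by have := hep t; lra.
have hZe : Rintegral P setT (fun t => Zf t * ep t) = 0.
  transitivity (Rintegral P setT (fun t => \sum_i c i * (Xp i t * ep t))).
    apply: eq_Rintegral => t _; rewrite Zsum mulr_suml.
    by apply: eq_bigr => i _; rewrite mulrA.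
  rewrite E_sum; last by move=> i; exact: mbM (mb_cst _) (mbM (mbXp i) mbep).
  apply: big1 => i _.
  rewrite E_Z; last exact: mbM (mbXp i) mbep.
  rewrite (ind_prod _ _ _ _ _ _ indVe ltr01 s1 (mXp i) (hXpb i) (Xthr i) mep hep1 epthr).
  by rewrite EXp0 mul0r mulr0.
have maP : measurable_fun (setT : set Tp) a.
  by apply: measurable_funN; exact: measurable_funD.
have mphP : measurable_fun (setT : set Tp) (fun t => phi r (a t)) := mphi_comp r _ maP.
have mph : measurable_fun setT (fun t => phi r (a t)) := gsig_toT piM mphP.
have phthr c : <<s pi >> [set t | c <= phi r (a t)] := gsig_thr mphP c.
have phb t : `|phi r (a t)| <= r := phi_bound r (a t) (ltW r0).
have mbph : mb (fun t => phi r (a t)) by split => //; exists r.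
have hphiZ : Rintegral P setT (fun t => phi r (a t) * Zf t) = 0.
  transitivity (Rintegral P setT (fun t => \sum_i c i * (Xp i t * phi r (a t)))).
    apply: eq_Rintegral => t _; rewrite Zsum mulr_sumr.
    by apply: eq_bigr => i _; ring.
  rewrite E_sum; last by move=> i; exact: mbM (mb_cst _) (mbM (mbXp i) mbph).
  apply: big1 => i _.
  rewrite E_Z; last exact: mbM (mbXp i) mbph.
  rewrite (ind_prod _ _ _ _ _ _ indVpi ltr01 r0 (mXp i) (hXpb i) (Xthr i) mph phb phthr).
  by rewrite EXp0 mul0r mulr0.
pose Bz := [set t | (b : T -> R) t = 0].
have mBzb : measurable (Bz : set Tb).
  by have := mbTb measurableT [set 0] (measurable_set1 0); rewrite setTI.
have mBz : measurable Bz := gsig_sub genbM _ mBzb.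
have mIb : measurable_fun (setT : set Tb) (\1_Bz : T -> R) := measurable_indic mBzb.
have indthr c : <<s genb >> [set t | c <= (\1_Bz : T -> R) t] := gsig_thr mIb c.
have mZ2v : measurable_fun (setT : set Tv) (fun t => Zf t ^+ 2 / 2).
  by apply: measurable_funM; [exact: measurable_funX | exact: measurable_cst].
have mZ2 : measurable_fun setT (fun t => Zf t ^+ 2 / 2) := gsig_toT genvM mZ2v.
have Z2thr c : <<s genv >> [set t | c <= Zf t ^+ 2 / 2] := gsig_thr mZ2v c.
have DD : 0 < 2 * D ^+ 2 + 1 by have := sqr_ge0 D; lra.
have Z2b t : `|Zf t ^+ 2 / 2| <= 2 * D ^+ 2 + 1.
  have h := hZ t; have h0 := normr_ge0 (Zf t).
  rewrite normrM normrX (ger0_norm (_ : 0 <= 2^-1)); last by rewrite invr_ge0 ler0n.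
  rewrite !expr2; nra.
have PBz : fine (P Bz) = 1 - alpha.
  have eq : [set t | b t != 0] = ~` Bz.
    apply/seteqP; split => t /=; first by move=> /eqP.
    by move=> h; apply/eqP.
  have ha : fine (P (~` Bz)) = alpha by rewrite -eq hb.
  rewrite -E_indic // -ha -E_indic; last exact: measurableC.
  rewrite -[in RHS](@E_cst _ _ _ P 1) -E_B; [|exact: mb_cst|exact: mb_indic (measurableC mBz)].
  apply: eq_Rintegral => t _; rewrite /indic in_setC.
  by case: (t \in Bz); rewrite /= ?subrr ?subr0.
have hBz : Rintegral P setT (fun t => \1_Bz t * (Zf t ^+ 2 / 2)) =
    (1 - alpha) * Rintegral P setT (fun t => Zf t ^+ 2 / 2).
  transitivity (Rintegral P setT (fun t => (Zf t ^+ 2 / 2) * \1_Bz t)).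
    by apply: eq_Rintegral => t _; exact: mulrC.
  rewrite (ind_prod _ _ _ _ _ _ indVb DD ltr01 mZ2 Z2b Z2thr (mb_indic mBz).1 (indic_le1 Bz) indthr).
  by rewrite E_indic // PBz mulrC.
have mbZ2 : mb (fun t => Zf t ^+ 2 / 2) := mbX2 _ mbZ.
have hS : Rintegral P setT (fun t => (dotX w Xp t - dotX wstar Xp t - ep t) ^+ 2 / 2)
   - Rintegral P setT (fun t => (dotX wstar Xp t - dotX wstar Xp t - ep t) ^+ 2 / 2)
   = Rintegral P setT (fun t => Zf t ^+ 2 / 2).
  rewrite -E_B; last 2 first.
  - exact: mbX2 _ (mbB (mbB (mbdot w) (mbdot wstar)) mbep).
  - exact: mbX2 _ (mbB (mbB (mbdot wstar) (mbdot wstar)) mbep).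
  transitivity (Rintegral P setT (fun t => Zf t ^+ 2 / 2 - Zf t * ep t)).
    apply: eq_Rintegral => t _; rewrite /Zf /=.
    by move: (dotX w Xp t) (dotX wstar Xp t) (ep t) => x y e; field.
  by rewrite E_B // ?hZe ?subr0 //; exact: mbM.
have mbI : mb (fun t => \1_Bz t * (Zf t ^+ 2 / 2)) := mbM (mb_indic mBz) mbZ2.
have hpt t : phi r (a t) * Zf t + \1_Bz t * (Zf t ^+ 2 / 2) <= Del t.
  rewrite /Del /indic; case: (boolP (t \in Bz)) => hin /=.
  - have hb0 : b t = 0 := set_mem hin.
    have ha' : a t = - ep t by rewrite /a hb0 addr0.
    have hepT := hep t; have hZT := hZ t.
    have h1 : `|a t| <= r by rewrite ha' normrN /r; lra.
    have h2 : `|Zf t + a t| <= r.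
      apply: le_trans (ler_normD _ _) _; rewrite ha' normrN /r; lra.
    rewrite (huber_quad _ _ h2) (huber_quad _ _ h1) (phi_quad _ _ h1) mul1r.
    rewrite !expr2; nra.
  - rewrite mul0r addr0; have := huber_convex r (Zf t) (a t) r0; lra.
have hlow : Rintegral P setT (fun t => phi r (a t) * Zf t)
    + Rintegral P setT (fun t => \1_Bz t * (Zf t ^+ 2 / 2)) <= Rintegral P setT Del.
  rewrite -E_D; [|exact: mbM mbph mbZ|exact: mbI].
  by apply: E_le => //; apply: mbD => //; exact: mbM.
rewrite hphiZ hBz add0r in hlow.
rewrite hS.
have ha : 0 < 1 - alpha by lra.
rewrite -(ler_pM2l ha) mulrA mulfV ?mul1r //; exact: lt0r_neq0.
Qed.
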